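(* Let $M_i = \{ j\cdot 2^{-i} \mid j \in \{0,\dots,2^i\}\}$, let $\widehat{\mathsf{M}}=\prod_{i\in\mathbb{N}}\mathsf{M}_i$ be the product of the finite discrete spaces $\mathsf{M}_i$ on $M_i$, and let $\mathsf{M}$ be the subspace of $\ell_1$ with underlying set $\{x \in \prod_i M_i : \sum_i |x(i)|<\infty\}$. Let $\mathbb{F}$ be the countable fan and $\mathsf{2}$ the discrete space $\{\mathtt{0},\mathtt{1}\}$. Define $f\colon \widehat{\mathsf{M}}\times\mathbb{N}\times\mathbb{N}^2\to\mathsf{2}$ by $f(x,k,a,b)=\mathtt{0}$ if $\sum_{i=a}^{a+b}x(i)\le 2^{-k}$ and $f(x,k,a,b)=\mathtt{1}$ otherwise, and define $g\colon\mathsf{M}\to\mathsf{2}^{\mathbb{N}\times\mathbb{F}}$ by $g(y)(k,a,b)=f(y,k,a,b)$ and $g(y)(k,\infty,\infty)=\mathtt{0}$ for $y\in\mathsf{M}$, $k,a,b\in\mathbb{N}$. Then for every $y\in\mathsf{M}$ the function $g(y)\colon\mathbb{N}\times\mathbb{F}\to\mathsf{2}$ is continuous, and moreover $f$ and $g$ are continuous.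
   Context: $\ell_1$ is the set of real sequences $x$ with $\|x\|_1=\sum_i|x(i)|<\infty$, with the metric $\|x-y\|_1$; $\mathsf{M}$ has the subspace topology. $\mathbb{N}$ and $\mathbb{N}^2$ are discrete. The countable fan $\mathbb{F}$ has underlying set $\mathbb{N}^2\cup\{(\infty,\infty)\}$ and the metric $d$ with $d((a,b),(\infty,\infty))=2^{-a}$ and $d((a,b),(a',b'))=\max\{2^{-a},2^{-a'}\}$ for distinct $(a,b),(a',b')\in\mathbb{N}^2$. Products and function spaces are formed in the cartesian closed category QCB of quotients of countably based spaces: the product carries the sequentialisation of the product topology, and $\mathsf{2}^{\mathbb{N}\times\mathbb{F}}$ is the set of continuous maps $\mathbb{N}\times\mathbb{F}\to\mathsf{2}$ with the sequentialisation of the compact-open topology. *)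

(* Defs.v *)
From HB Require Import structures.
From mathcomp Require Import all_boot all_order all_algebra.
From mathcomp Require Import all_classical all_reals all_analysis.
Set Implicit Arguments. Unset Strict Implicit. Unset Printing Implicit Defensive.
Import Order.TTheory GRing.Theory Num.Theory.
Local Open Scope classical_set_scope.
Local Open Scope ring_scope.

(* A "space" is a carrier set A : set T together with a family O of open
   subsets of A. *)

Definition generated {T : Type} (A : set T) (B : set (set T)) : set (set T) :=
  fun U => U `<=` A /\
    forall x, U x -> exists s : seq (set T),
      (forall V, V \in s -> B V /\ V x) /\
      (forall z, A z -> (forall V, V \in s -> V z) -> U z).

Definition discrete {T : Type} (A : set T) : set (set T) := fun U => U `<=` A.

Definition metric_top {R : realType} {T : Type} (A : set T) (d : T -> T -> R)
  : set (set T) :=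
  fun U => U `<=` A /\
    forall x, U x -> exists2 e : R, 0 < e &
      forall z, A z -> d x z < e -> U z.

Definition prod_top {S T : Type} (A : set S) (OA : set (set S))
  (B : set T) (OB : set (set T)) : set (set (S * T)) :=
  generated (A `*` B) [set U `*` V | U in OA & V in OB].

Definition converges {T : Type} (O : set (set T)) (u : nat -> T) (p : T) :=
  forall U, O U -> U p -> exists N, forall n, (N <= n)%N -> U (u n).

Definition seqz {T : Type} (A : set T) (O : set (set T)) : set (set T) :=
  fun U => U `<=` A /\
    forall (u : nat -> T) p, (forall n, A (u n)) -> A p ->
      converges O u p -> U p -> exists N, forall n, (N <= n)%N -> U (u n).

Definition cont {S T : Type} (A : set S) (OA : set (set S))
  (B : set T) (OB : set (set T)) (h : S -> T) :=
  (forall x, A x -> B (h x)) /\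
  (forall V, OB V -> OA (A `&` (h @^-1` V))).

Definition compact_in {T : Type} (A : set T) (O : set (set T)) (K : set T) :=
  K `<=` A /\
  forall C : set (set T), (forall U, C U -> O U) ->
    (forall x, K x -> exists2 U, C U & U x) ->
    exists s : seq (set T), (forall U, U \in s -> C U) /\
      (forall x, K x -> exists2 U, U \in s & U x).

Definition compact_open {S T : Type} (A : set S) (OA : set (set S))
  (B : set T) (OB : set (set T)) : set (set (S -> T)) :=
  generated (cont A OA B OB)
    [set W | exists K V, compact_in A OA K /\ OB V /\
              W = [set h | forall z, K z -> V (h z)]].

Section Spaces.
Variable R : realType.

Definition Mi (i : nat) : set R :=
  [set r | exists2 j : nat, (j <= 2 ^ i)%N & r = j%:R * (2 ^- i)].

Definition Mhat : set (nat -> R) := [set x | forall i, Mi i (x i)].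
Definition Mhat_top : set (set (nat -> R)) :=
  generated Mhat [set W | exists i (V : set R), V `<=` Mi i /\
                            W = [set x | V (x i)]].

Definition in_l1 (x : nat -> R) : Prop :=
  (\sum_(i <oo) (`|x i|)%:E < +oo)%E.
Definition l1_dist (x y : nat -> R) : R :=
  fine (\sum_(i <oo) (`|x i - y i|)%:E)%E.
Definition Mset : set (nat -> R) := [set x | Mhat x /\ in_l1 x].
Definition M_top : set (set (nat -> R)) := metric_top Mset l1_dist.

Definition f (x : nat -> R) (k a b : nat) : bool :=
  if \sum_(a <= i < a + b + 1) x i <= 2 ^- k then false else true.

(* domain of f as a QCB space: the sequentialisation of the product topology *)
Definition fdom : set ((nat -> R) * nat * (nat * nat)) := Mhat `*` setT `*` setT.
Definition fdom_top : set (set ((nat -> R) * nat * (nat * nat))) :=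
  seqz fdom (prod_top (Mhat `*` setT) (prod_top Mhat Mhat_top setT (discrete setT))
                      setT (discrete setT)).
Definition f_unc (p : (nat -> R) * nat * (nat * nat)) : bool :=
  f p.1.1 p.1.2 p.2.1 p.2.2.

End Spaces.

(* The countable fan F : N^2 ∪ {(oo,oo)}; None stands for (oo,oo). *)
Definition Fan := option (nat * nat).
Definition fan_dist {R : realType} (p q : Fan) : R :=
  match p, q with
  | None, None => 0
  | Some (a, _), None => 2 ^- a
  | None, Some (a, _) => 2 ^- a
  | Some (a, b), Some (a', b') =>
      if (a, b) == (a', b') then 0 else Num.max (2 ^- a) (2 ^- a')
  end.
Definition Fan_top {R : realType} : set (set Fan) :=
  metric_top setT (@fan_dist R).

(* N x F in QCB: sequentialisation of the product topology *)
Definition NF_top {R : realType} : set (set (nat * Fan)) :=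
  seqz setT (prod_top setT (discrete setT) setT (@Fan_top R)).

Definition two_top : set (set bool) := discrete setT.
Definition CNF {R : realType} : set (nat * Fan -> bool) :=
  cont setT (@NF_top R) setT two_top.
Definition CNF_top {R : realType} : set (set (nat * Fan -> bool)) :=
  seqz (@CNF R) (compact_open setT (@NF_top R) setT two_top).

Definition g {R : realType} (y : nat -> R) : nat * Fan -> bool :=
  fun p => match p.2 with
           | Some (a, b) => f y p.1 a b
           | None => false
           end.

(* Main.v *)
Require Import Defs.
From HB Require Import structures.
From mathcomp Require Import all_boot all_order all_algebra.
From mathcomp Require Import all_classical all_reals all_analysis.
From Stdlib Require Import Lia.
From mathcomp Require Import zify lra.
Import Order.TTheory GRing.Theory Num.Theory.
Local Open Scope classical_set_scope.
Local Open Scope ring_scope.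

Section Ana.
Variable R : realType.

Lemma p2_gt0 n : 0 < (2:R) ^- n.
Proof. by rewrite invr_gt0 exprn_gt0. Qed.

Lemma p2_lt m n : (2:R) ^- m < 2 ^- n -> (n < m)%N.
Proof. by rewrite ltf_pV2 ?posrE ?exprn_gt0// ltr_eXn2l// ltr1n. Qed.

Lemma p2_le m n : (n <= m)%N -> (2:R) ^- m <= 2 ^- n.
Proof. by move=> h; rewrite lef_pV2 ?posrE ?exprn_gt0// ler_eXn2l// ltr1n. Qed.

Lemma Mi_ge0 i (r : R) : Mi i r -> 0 <= r.
Proof. by case=> j _ ->; rewrite mulr_ge0// ltW// p2_gt0. Qed.

Lemma Mi_eq i (r s : R) : Mi i r -> Mi i s -> `|r - s| < 2 ^- i -> r = s.
Proof.
case=> j _ -> [j' _ ->].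
rewrite -mulrBl normrM (ger0_norm (ltW (p2_gt0 i))) => h.
have {h} h : `|j%:R - j'%:R| < 1 :> R by rewrite -(ltr_pM2r (p2_gt0 i)) mul1r.
congr (_ * _).
case: (ltngtP j j') => hj.
- by rewrite distrC -natrB ?(ltnW hj)// normr_nat ltrn1 in h; lia.
- by rewrite -natrB ?(ltnW hj)// normr_nat ltrn1 in h; lia.
- by rewrite hj.
Qed.

Lemma fin_le_series (u : nat -> R) a b : (forall i, 0 <= u i) ->
  ((\sum_(a <= i < b) u i)%:E <= \sum_(i <oo) (u i)%:E)%E.
Proof.
move=> u0; rewrite -sumEFin.
apply: (le_trans (@nneseries_lim_ge R _ xpredT a b _)) => [n _ _|].
  by rewrite lee_fin.
rewrite (nneseries_split 0 a) ?add0n; last by move=> k _; rewrite lee_fin.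
by apply: leeDr; rewrite sume_ge0// => k _; rewrite lee_fin.
Qed.

Lemma tail_small (u : nat -> R) : (forall i, 0 <= u i) ->
  (\sum_(i <oo) (u i)%:E < +oo)%E -> forall eps, 0 < eps ->
  exists A, forall a b, (A <= a)%N -> \sum_(a <= i < b) u i < eps.
Proof.
move=> u0 fin eps e0.
have cv := @nneseries_tail_cvg R (fun i => (u i)%:E) xpredT fin (fun k _ => u0 k).
have H0 : nbhs (0%E : \bar R) [set y | (y < eps%:E)%E].
  apply: open_nbhs_nbhs; split; first exact: open_ereal_lt_ereal.
  by rewrite /= lte_fin.
have [A _ HA] := cv _ H0; exists A => a b Aa.
rewrite -lte_fin; apply: le_lt_trans (HA a Aa).
rewrite -sumEFin.
by apply: (@nneseries_lim_ge R _ xpredT a b) => n _ _; rewrite lee_fin.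
Qed.

Lemma Mset_ge0 (x : nat -> R) i : Mset x -> 0 <= x i.
Proof. by case=> /(_ i) /Mi_ge0. Qed.

Lemma dist_fin (x y : nat -> R) : Mset x -> Mset y ->
  (\sum_(i <oo) (`|x i - y i|)%:E < +oo)%E.
Proof.
move=> [_ hx] [_ hy].
apply: (le_lt_trans (@lee_nneseries R _ (fun i => (`|x i|)%:E + (`|y i|)%:E)%E xpredT 0 _ _)).
- by move=> i _ _; rewrite lee_fin.
- by move=> n _; rewrite -EFinD lee_fin ler_normB.
rewrite nneseriesD; first exact: lte_add_pinfty.
- by move=> i _ _; rewrite lee_fin.
- by move=> i _ _; rewrite lee_fin.
Qed.

Lemma fin_le_dist (x y : nat -> R) a b : Mset x -> Mset y ->
  \sum_(a <= i < b) `|x i - y i| <= l1_dist x y.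
Proof.
move=> hx hy; rewrite /l1_dist -lee_fin fineK; first exact: fin_le_series.
rewrite ge0_fin_numE ?dist_fin//.
by apply: nneseries_ge0 => n _ _; rewrite lee_fin.
Qed.

Lemma dist_eq (x y : nat -> R) m : Mset x -> Mset y ->
  l1_dist x y < 2 ^- m -> forall i, (i <= m)%N -> x i = y i.
Proof.
move=> hx hy hd i im; case: (hx) => hx1 _; case: (hy) => hy1 _.
apply: (Mi_eq _ _ _ (hx1 i) (hy1 i)).
apply: (le_lt_trans _ (lt_le_trans hd (p2_le _ _ im))).
by have := fin_le_dist _ _ i i.+1 hx hy; rewrite big_nat1.
Qed.


Set Implicit Arguments. Unset Strict Implicit.

Lemma rect_open {S T : Type} (A : set S) OA (B : set T) OB U V :
  U `<=` A -> V `<=` B -> OA U -> OB V -> prod_top A OA B OB (U `*` V).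
Proof.
move=> UA VB oU oV; split; first by move=> [x y] [/UA ? /VB ?].
move=> x Ux; exists [:: U `*` V]; split.
- move=> W; rewrite inE => /eqP ->; split => //.
  by exists U => //; exists V.
- by move=> z _ /(_ (U `*` V) (mem_head _ _)).
Qed.

Lemma prod_seqz {T : Type} (O : set (set T)) U : O U -> seqz setT O U.
Proof.
move=> oU; split; first by [].
by move=> u p _ _ cv Up; exact: cv U oU Up.
Qed.

Lemma eventually_list {X : eqType} (s : seq X) (P : X -> nat -> Prop) :
  (forall V, V \in s -> exists N, forall n, (N <= n)%N -> P V n) ->
  exists N, forall n, (N <= n)%N -> forall V, V \in s -> P V n.
Proof.
elim: s => [|x s IH] H; first by exists 0%N => n _ V.
have [N1 H1] := H x (mem_head _ _).
have [N2 H2] : exists N, forall n, (N <= n)%N -> forall V, V \in s -> P V n.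
  apply: IH => V Vs; apply: (H V); rewrite inE Vs orbT //=.
exists (maxn N1 N2) => n; rewrite geq_max => /andP[n1 n2] V.
by rewrite inE => /orP[/eqP ->|Vs]; [exact: H1|exact: H2].
Qed.

Lemma eventually_nat (P : nat -> nat -> Prop) :
  (forall i, exists N, forall n, (N <= n)%N -> P i n) ->
  forall c, exists N, forall n, (N <= n)%N -> forall i, (i < c)%N -> P i n.
Proof.
move=> H; elim=> [|c [N2 H2]]; first by exists 0%N.
have [N1 H1] := H c.
exists (maxn N1 N2) => n; rewrite geq_max => /andP[n1 n2] i.
rewrite ltnS leq_eqVlt => /orP[/eqP ->|ic]; [exact: H1|exact: H2].
Qed.

Lemma fan_iso a b (z : Fan) : @fan_dist R (Some (a, b)) z < 2 ^- a -> z = Some (a, b).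
Proof.
case: z => [[a' b']|] /=; last by rewrite ltxx.
case: eqP => [[-> ->]|_] //.
by rewrite gt_max ltxx.
Qed.

Lemma fan_open (W : set Fan) :
  (W None -> exists2 e : R, 0 < e & forall z, fan_dist None z < e -> W z) ->
  @Fan_top R W.
Proof.
move=> H; split; first by [].
move=> [[a b]|] Wx; last by have [e e0 He] := H Wx; exists e => // z _; exact: He.
by exists (2 ^- a); [exact: p2_gt0|move=> z _ /fan_iso ->].
Qed.

Lemma fan_small A (z : Fan) : @fan_dist R None z < 2 ^- A ->
  z = None \/ exists a b, z = Some (a, b) /\ (A < a)%N.
Proof.
case: z => [[a b]|] /= h; last by left.
by right; exists a, b; split => //; exact: p2_lt.
Qed.

Lemma tail_y (y : nat -> R) : Mset y -> forall eps, 0 < eps ->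
  exists A, forall a b, (A <= a)%N -> \sum_(a <= i < b) y i < eps.
Proof.
move=> hy eps e0; have [_ fin] := hy.
have [A HA] := tail_small (fun i => `|y i|) (fun i => normr_ge0 _) fin eps e0.
exists A => a b aA; rewrite (eq_bigr (fun i => `|y i|)); first exact: HA.
by move=> i _; rewrite ger0_norm// (Mset_ge0 _ _ hy).
Qed.

Lemma conv_g_pt (y : nat -> R) u p : Mset y ->
  converges (prod_top setT (discrete setT) setT (@Fan_top R)) u p ->
  exists N, forall n, (N <= n)%N -> g y (u n) = g y p.
Proof.
move=> hy cv; case: p cv => k [[a b]|] cv.
- have [|//|N HN] := cv ([set k] `*` [set Some (a, b)]).
    apply: rect_open => //; apply: fan_open => //.
  by exists N => n /HN; case: (u n) => k' z /= [-> ->].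
- have [A HA] := tail_y hy (p2_gt0 k).
  have [||N HN] := cv ([set k] `*` [set z | @fan_dist R None z < 2 ^- A]).
  + apply: rect_open => //; apply: fan_open => _.
    by exists (2 ^- A) => //; exact: p2_gt0.
  + by split => //=; exact: p2_gt0.
  exists N => n /HN; case: (u n) => k' z /= [-> /fan_small [->|[a [b [-> Aa]]]]] //=.
  rewrite /g /= /f ifT //; apply: ltW; apply: HA; exact: ltnW.
Qed.

Lemma g_cont (y : nat -> R) : Mset y -> cont setT (@NF_top R) setT two_top (g y).
Proof.
move=> hy; split; first by [].
move=> V _; split; first by [].
move=> u p _ _ cv [_ Vp]; have [N HN] := conv_g_pt hy cv.
by exists N => n /HN e; split => //; rewrite /preimage /= e.
Qed.


Lemma Mhat_coord_open (x : nat -> R) i : Mhat x ->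
  Mhat_top [set w | Mhat w /\ w i = x i].
Proof.
move=> hx; split; first by move=> w [].
move=> w [hw wi]; exists [:: [set v | [set x i] (v i)]]; split.
- move=> V; rewrite inE => /eqP ->; split => //.
  exists i, [set x i]; split => //; by move=> r ->; exact: hx.
- by move=> z hz /(_ _ (mem_head _ _)) /= zi.
Qed.

Lemma f_cont : cont (@fdom R) (@fdom_top R) setT two_top (@f_unc R).
Proof.
split; first by [].
move=> V _; split; first by move=> ? [].
move=> u [[x k] [a b]] hu [[hx _] _] cv [_ Vp].
pose O i := ([set w | Mhat w /\ w i = x i] `*` [set k]) `*` [set (a, b)].
have HO : forall i, exists N, forall n, (N <= n)%N -> O i (u n).
  move=> i; apply: (cv (O i)) => //; apply: rect_open => //.
  - by move=> [w k'] [[]].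
  - by apply: rect_open => //; [move=> w []|exact: Mhat_coord_open].
have [N HN] := eventually_nat HO (a + b + 1).
exists N => n /HN Hn; split; first exact: hu.
have : O a (u n) by apply: Hn; lia.
rewrite /preimage /=; move: (Hn) => {Hn}.
case: (u n) => [[w k'] [a' b']] Hn [[[_ _] /= ->] /= [-> ->]].
suff -> : f_unc (w, k, (a, b)) = f_unc (x, k, (a, b)) by [].
rewrite /f_unc /f /=; rewrite (eq_big_nat _ _ (F2 := x)) // => i /andP[_ ia].
by case: (Hn i ia) => [[[_ /= ->] _] _].
Qed.

Definition Uj (A j : nat) : set (nat * Fan) :=
  [set p | (p.1 < j)%N /\
     forall a b, p.2 = Some (a, b) -> (a < A)%N -> (a + b < j)%N].

Lemma Uj_mono A j j' : (j <= j')%N -> Uj A j `<=` Uj A j'.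
Proof.
move=> jj p [h1 h2]; split; first lia.
by move=> a b e aA; have := h2 a b e aA; lia.
Qed.

Lemma Uj_open A j : @NF_top R (Uj A j).
Proof.
apply: prod_seqz; split; first by [].
move=> [k z] [hk hz].
exists [:: [set k' | (k' < j)%N] `*`
  [set z' | forall a b, z' = Some (a, b) -> (a < A)%N -> (a + b < j)%N]].
split.
- move=> W; rewrite inE => /eqP ->; split => //.
  exists [set k' | (k' < j)%N] => //.
  exists [set z' | forall a b, z' = Some (a, b) -> (a < A)%N -> (a + b < j)%N] => //.
  apply: fan_open => _; exists (2 ^- A); first exact: p2_gt0.
  move=> z' /fan_small [-> //|[a [b [-> Aa]]]] a' b' [<- _] aA.
  by exfalso; lia.
- by move=> [k' z'] _ /(_ _ (mem_head _ _)) [h1 h2].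
Qed.

Lemma compact_bound K : compact_in setT (@NF_top R) K ->
  forall A, exists j, forall p, K p -> Uj A j p.
Proof.
move=> [_ cK] A.
have h1 : forall U, [set U | exists j, U = Uj A j] U -> @NF_top R U.
  by move=> U [j ->]; exact: Uj_open.
have h2 : forall x, K x -> exists2 U, [set U | exists j, U = Uj A j] U & U x.
  move=> [k z] _.
  exists (Uj A (k.+1 + (if z is Some (a, b) then (a + b).+1 else 0))); first by eexists.
  split => /=; first lia.
  by case: z => [[a0 b0]|] // a b [-> ->] _; lia.
have [s [sC cover]] := cK _ h1 h2.
have [J HJ] : exists J, forall U, U \in s -> U `<=` Uj A J.
  elim: s sC {cover} => [|U s IH] sC; first by exists 0%N.
  have [j0 e0] := sC U (mem_head _ _).
  have [J' HJ'] : exists J, forall U, U \in s -> U `<=` Uj A J.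
    by apply: IH => V Vs; apply: sC; rewrite inE Vs orbT.
  exists (maxn j0 J') => V; rewrite inE => /orP[/eqP ->|Vs].
    by rewrite e0; apply: Uj_mono; exact: leq_maxl.
  by apply: subset_trans (HJ' V Vs) _; apply: Uj_mono; exact: leq_maxr.
exists J => p Kp; have [U Us Up] := cover p Kp; exact: HJ U Us p Up.
Qed.


Lemma sum_shift (y z : nat -> R) a b : Mset y -> Mset z ->
  \sum_(a <= i < b) z i <= \sum_(a <= i < b) y i + l1_dist y z.
Proof.
move=> hy hz; apply: le_trans (lerD (lexx _) (fin_le_dist _ _ a b hy hz)).
rewrite -big_split /=; apply: ler_sum_nat => i _.
by rewrite distrC; have := ler_norm (z i - y i); lra.
Qed.

Lemma agree_K (y : nat -> R) ys K : Mset y -> (forall n, Mset (ys n)) ->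
  (forall e, 0 < e -> exists N, forall n, (N <= n)%N -> l1_dist y (ys n) < e) ->
  compact_in setT (@NF_top R) K ->
  exists N, forall n, (N <= n)%N -> forall z, K z -> g (ys n) z = g y z.
Proof.
move=> hy hys hd cK.
have [j0 Hj0] := compact_bound cK 0.
set c := (2:R) ^- j0.
have c0 : 0 < c by exact: p2_gt0.
have e0 : 0 < c / 2 by rewrite divr_gt0.
have [A HA] := tail_y hy e0.
have [j1 Hj1] := compact_bound cK A.
have dpos : 0 < Num.min (c / 2) (2 ^- j1) by rewrite lt_min e0 p2_gt0.
have [N HN] := hd _ dpos.
exists N => n Nn [k z] Kz.
have := HN n Nn; rewrite lt_min => /andP[d1 d2].
case: z Kz => [[a b]|] Kz //=; rewrite /g /=.
case: (ltnP a A) => aA.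
- have hab := (Hj1 _ Kz).2 a b erefl aA.
  rewrite /f (eq_big_nat _ _ (F2 := y)) // => i /andP[_ ia].
  by symmetry; apply: (dist_eq _ _ _ hy (hys n) d2); rewrite /=; lia.
- have kj : (k <= j0)%N by have := (Hj0 _ Kz).1; rewrite /=; lia.
  have ck : c <= 2 ^- k by exact: p2_le.
  have s1 := HA a (a + b + 1)%N aA.
  have s2 := sum_shift a (a + b + 1)%N hy (hys n).
  rewrite /f !ifT //.
  + by apply: ltW; apply: lt_le_trans ck; lra.
  + by apply: ltW; apply: lt_le_trans ck; lra.
Qed.

Lemma conv_g (y : nat -> R) ys : Mset y -> (forall n, Mset (ys n)) ->
  (forall e, 0 < e -> exists N, forall n, (N <= n)%N -> l1_dist y (ys n) < e) ->
  converges (Defs.compact_open setT (@NF_top R) setT two_top)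
    (fun n => g (ys n)) (g y).
Proof.
move=> hy hys hd U [_ HU] Uy.
have [s [sV hs]] := HU _ Uy.
have HE : forall V, V \in s -> exists N, forall n, (N <= n)%N -> V (g (ys n)).
  move=> V /sV [[K [V' [cK [_ eV]]]] Vy]; subst V.
  have [N HN] := agree_K hy hys hd cK.
  by exists N => n /HN HK z Kz; rewrite HK //; exact: Vy.
have [N HN] := eventually_list HE.
by exists N => n /HN Hn; apply: hs; [exact: g_cont|exact: Hn].
Qed.

End Ana.

Theorem lemma3p2 (R : realType) :
  (forall y : nat -> R, Mset y -> cont setT (@NF_top R) setT two_top (g y)) /\
  cont (@fdom R) (@fdom_top R) setT two_top (@f_unc R) /\
  cont (@Mset R) (@M_top R) (@CNF R) (@CNF_top R) (@g R).
Proof.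
split; first exact: g_cont.
split; first exact: f_cont.
split; first by move=> y hy; exact: g_cont.
move=> V [_ HV]; split; first by move=> y [].
move=> y [hy Vy].
case: (pselect (exists2 e : R, 0 < e & forall z, Mset z -> l1_dist y z < e ->
   (@Mset R `&` g @^-1` V) z)) => [ok|nE]; first exact: ok.
have hn : forall n : nat, exists z, Mset z /\ l1_dist y z < (n.+1%:R)^-1 /\ ~ V (g z).
  move=> n; apply: contrapT => hc; apply: nE; exists (n.+1%:R)^-1.
    by rewrite invr_gt0 ltr0n.
  move=> z hz dz; split => //; apply: contrapT => nv; apply: hc.
  by exists z.
have [ys hys] := choice hn.
have hd : forall e : R, 0 < e -> exists N, forall n, (N <= n)%N -> l1_dist y (ys n) < e.
  move=> e e0; exists (Num.Def.trunc e^-1) => n Nn.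
  apply: lt_trans (hys n).2.1 _.
  rewrite -[e]invrK ltf_pV2 ?posrE ?invr_gt0 ?ltr0n //.
  apply: lt_le_trans (truncnS_gt _) _; by rewrite ler_nat ltnS.
have [N HN] := HV (fun n => g (ys n)) (g y) (fun n => g_cont (hys n).1)
  (g_cont hy) (conv_g hy (fun n => (hys n).1) hd) Vy.
by exfalso; apply: (hys N).2.2; exact: HN.
Qed.
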